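(* Let $T$ be a text of length $n$ with suffix tree $\mathcal T$, and let $d=\lceil\log_2 n\rceil$. The total number of heavy Weiner links whose source is a w-special node of $\mathcal T$ is $O(n/d)$.
   Context: For a node $v$ of the suffix tree $\mathcal T$ whose root-to-node path spells the string $p$, and a symbol $c$ such that $cp$ occurs in $T$, the Weiner link $\mathrm{wlink}(v,c)$ goes from $v$ (its source) to the locus $u$ of $cp$ in $\mathcal T$ (the highest node whose path label has $cp$ as a prefix); $c$ is its label. A Weiner link is heavy if its target node has at least $d$ leaf descendants, and light otherwise. A node $v$ is w-special if at least two heavy Weiner links have $v$ as source. *)

(* Defs.v *)
(* Suffix trees are represented, as usual, by the path labels
   of their nodes: a node is identified with the string spelled on the
   root-to-node path. *)
From mathcomp Require Import all_boot.
Set Implicit Arguments. Unset Strict Implicit. Unset Printing Implicit Defensive.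

Section SuffixTree.
Variable A : eqType.
Implicit Types (T p q u v : seq A) (c : A).

Definition terminated T : bool :=
  if T is x :: s then count_mem (last x s) T == 1 else false.

Definition substrs T : seq (seq A) :=
  undup [seq take k (drop i T) | i <- iota 0 (size T).+1, k <- iota 0 (size T).+1].

Definition right_maximal T p : bool :=
  has (fun a => has (fun b => (a != b) && infix (rcons p a) T && infix (rcons p b) T) T) T.

(* Explicit nodes of the suffix tree of T (T terminated): the root (empty
   string), the branching nodes (right-maximal substrings) and the leaves
   (the suffixes of T). *)
Definition st_node T p : bool :=
  infix p T && [|| p == [::], suffix p T | right_maximal T p].

(* Tree structure: v is a descendant of u iff the label of u is a prefix of
   the label of v.  A leaf is a node with no proper descendant node. *)
Definition st_leaf T v : bool :=
  st_node T v && ~~ has (fun w => st_node T w && (w != v) && prefix v w) (substrs T).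

Definition leaf_count T u : nat :=
  count (fun v => st_leaf T v && prefix u v) (substrs T).

Definition locus T q : seq A :=
  head q (sort (fun x y => size x <= size y)
               [seq u <- substrs T | st_node T u && prefix q u]).

Definition heavy_wlink T d p c : bool :=
  st_node T p && infix (c :: p) T && (d <= leaf_count T (locus T (c :: p))).

(* Number of heavy Weiner links with source p (labels range over the symbols
   of T, the only possible labels). *)
Definition n_heavy T d p : nat := count (heavy_wlink T d p) (undup T).

Definition w_special T d p : bool := st_node T p && (1 < n_heavy T d p).

Definition heavy_links_from_wspecial T d : nat :=
  \sum_(p <- substrs T | w_special T d p) n_heavy T d p.

End SuffixTree.

(* Main.v *)
Require Import Defs.
From mathcomp Require Import all_boot.
From mathcomp Require Import zify.
Set Implicit Arguments. Unset Strict Implicit. Unset Printing Implicit Defensive.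

Lemma cnt_sum (I : Type) (a : pred I) (r : seq I) :
  count a r = \sum_(j <- r) (a j : nat).
Proof. by elim: r => [|x r IH]; rewrite ?big_nil ?big_cons //= IH. Qed.

Lemma leq_sum_in (I : eqType) (r : seq I) (F G : I -> nat) :
  (forall i, i \in r -> F i <= G i) -> \sum_(i <- r) F i <= \sum_(i <- r) G i.
Proof.
elim: r => [|a r IH] H; first by rewrite !big_nil.
rewrite !big_cons leq_add ?H ?mem_head // IH // => i Hi.
by apply: H; rewrite inE Hi orbT.
Qed.

Section Work.
Variable A : eqType.
Variable T : seq A.
Variable d : nat.

Definition occ (x : seq A) : nat := \sum_(i <- iota 0 (size T)) (prefix x (drop i T) : nat).
Definition hh (y : seq A) : nat := \sum_(c <- undup T) (d <= occ (c :: y) : nat).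
Definition ff (x : seq A) : nat :=
  \sum_(y <- substrs T) (if suffix x y && (1 < hh y) then hh y else 0).

Lemma mem_substrs y : y \in substrs T -> infix y T.
Proof.
rewrite /substrs mem_undup => /allpairsP [[i k] [_ _ /= ->]].
apply: (prefix_infix_trans (prefix_take _ _)).
apply: suffixW.
by rewrite -{2}(cat_take_drop i T) suffix_suffix.
Qed.


Lemma telesc (P : nat -> nat) a m :
  \sum_(i <- iota a m) P i.+1 + P a = P (a + m) + \sum_(i <- iota a m) P i.
Proof.
elim: m a => [|m IH] a.
  by rewrite /= !big_nil !addn0 add0n.
rewrite /= !big_cons.
have := IH a.+1. rewrite addSnnS. lia.
Qed.

Lemma occ_children x : \sum_(c <- undup T) occ (c :: x) <= occ x.
Proof.
rewrite /occ (exchange_big).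
apply: (@leq_trans (\sum_(i <- iota 0 (size T)) (prefix x (drop i.+1 T) : nat))).
  apply: leq_sum => i _.
  case E: (drop i T) => [|a r].
    by rewrite big1 // => c _.
  have Er : drop i.+1 T = r by rewrite -addn1 addnC -drop_drop E /= drop0.
  rewrite Er.
  case: (boolP (prefix x r)) => Hx.
    under eq_bigr => c _ do rewrite prefix_cons Hx andbT.
    by rewrite -(cnt_sum (pred1 a)) count_uniq_mem ?undup_uniq ?leq_b1.
  rewrite big1 // => c _; by rewrite prefix_cons (negbTE Hx) andbF.
have := telesc (fun i => prefix x (drop i T) : nat) 0 (size T).
rewrite add0n drop_size drop0.
case: x => [|c x] /=; last by lia.
rewrite prefix0s; lia.
Qed.
Lemma substrs_mem y : infix y T -> y \in substrs T.
Proof.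
move=> /infixP [s [s' E]].
rewrite /substrs mem_undup; apply/allpairsP; exists (size s, size y).
split.
- by rewrite mem_iota /= E !size_cat; lia.
- by rewrite mem_iota /= E !size_cat; lia.
- by rewrite /= E drop_size_cat // take_size_cat.
Qed.

Lemma leaf_drop v : st_leaf T v -> v != [::] -> exists2 i, i < size T & v = drop i T.
Proof.
rewrite /st_leaf /st_node => /andP [/andP [Hinf Hor] Hno] Hv.
case/or3P: Hor => [/eqP Hv0 | Hsuf | Hrm].
- by rewrite Hv0 in Hv.
- case/suffixP: Hsuf => s E; exists (size s); last by rewrite E drop_size_cat.
  rewrite E size_cat; case: v Hv {Hinf Hno E} => //= *; lia.
- exfalso; move: Hrm; rewrite /right_maximal => /hasP [a _ /hasP [b _ /andP [/andP [_ Ha] _]]].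
  case/infixP: Ha => s [s' E].
  have Hs : suffix (rcons v a ++ s') T by rewrite E suffix_suffix.
  move/negP: Hno; apply; apply/hasP; exists (rcons v a ++ s').
    exact/substrs_mem/suffixW.
  rewrite /st_node (suffixW Hs) Hs orbT /=.
  apply/andP; split; last by rewrite -cats1 -catA prefix_prefix.
  apply/eqP => Ew; have := congr1 size Ew; rewrite size_cat size_rcons; lia.
Qed.

Lemma leaf_bound u q : prefix q u -> q != [::] -> leaf_count T u <= occ q.
Proof.
move=> Hqu Hq.
apply: (@leq_trans (count (fun v => st_leaf T v && prefix q v) (substrs T))).
  apply: sub_count => v /andP [-> Hv] /=; exact: prefix_trans Hqu Hv.
rewrite /occ -(cnt_sum (fun i => prefix q (drop i T))) -!size_filter.
rewrite -(size_map (fun i => drop i T) [seq i <- iota 0 (size T) | prefix q (drop i T)]).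
apply: uniq_leq_size; first by apply: filter_uniq; apply: undup_uniq.
move=> v; rewrite mem_filter => /andP [/andP [Hl Hp] Hin].
have Hv : v != [::].
  apply/eqP => Ev; move: Hp; rewrite Ev prefixs0 => Hq0; by rewrite Hq0 in Hq.
have [i Hi Ev] := leaf_drop Hl Hv.
apply/mapP; exists i => //.
by rewrite mem_filter mem_iota /= -Ev Hp Hi.
Qed.

Lemma prefix_locus q : prefix q (locus T q).
Proof.
rewrite /locus; case E: (sort _ _) => [|u l] /=; first exact: prefix_refl.
have : u \in sort (fun x y : seq A => size x <= size y)
    [seq u <- substrs T | st_node T u && prefix q u] by rewrite E mem_head.
by rewrite mem_sort mem_filter => /andP [/andP [_ ->] _].
Qed.

Lemma heavy_occ p c : heavy_wlink T d p c -> d <= occ (c :: p).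
Proof.
move=> /andP [_ H]; apply: leq_trans H _.
by apply: leaf_bound; [exact: prefix_locus | by []].
Qed.

Lemma ff_rec x : ff x <= (if 1 < hh x then hh x else 0) + \sum_(c <- undup T) ff (c :: x).
Proof.
rewrite /ff exchange_big /=.
apply: (@leq_trans (\sum_(y <- substrs T) ((y == x) * (if 1 < hh x then hh x else 0)
   + \sum_(c <- undup T) (if suffix (c :: x) y && (1 < hh y) then hh y else 0)))).
  apply: leq_sum_in => y Hy.
  case: ifP => [/andP [Hs Hh] | _]; last by [].
  case: (eqVneq y x) => [Eyx | Hyx].
    by rewrite mul1n -Eyx Hh leq_addr.
  rewrite mul0n add0n.
  case/suffixP: Hs => s E; case/lastP: s E => [|s' c] E.
    by rewrite E cat0s eqxx in Hyx.
  have Hc : c \in undup T.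
    rewrite mem_undup; have Hsub := mem_infix (mem_substrs Hy); apply: Hsub.
    by rewrite E mem_cat mem_rcons mem_head.
  rewrite (bigD1_seq c Hc (undup_uniq T)) /=.
  have -> : suffix (c :: x) y by rewrite E cat_rcons suffix_suffix.
  by rewrite Hh leq_addr.
rewrite big_split /= leq_add2r -big_distrl /= -(cnt_sum (pred1 x)).
rewrite count_uniq_mem ?undup_uniq //.
by case: (_ \in _); rewrite ?mul1n ?mul0n.
Qed.

End Work.

Lemma main_ind (A : eqType) (T : seq A) d k : forall x, size T < size x + k ->
  (occ T x < d -> ff T d x = 0) /\
  ff T d x * d + (if d <= occ T x then 2 * d else 0) <= 2 * occ T x.
Proof.
elim: k => [|k IH] x Hk.
  have Hf : ff T d x = 0.
    rewrite /ff big1_seq // => y /andP [_ Hy].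
    have := size_infix (mem_substrs Hy).
    case Hs: (suffix x y) => //= H; have := size_suffix Hs; lia.
  have Ho : occ T x = 0.
    rewrite /occ big1_seq // => i /andP [_ Hi].
    case Hp: (prefix x (drop i T)) => //; have := size_prefix Hp; rewrite size_drop; lia.
  rewrite Hf Ho; split => //; case: (leqP d 0) => H; lia.
have IHc c : (occ T (c :: x) < d -> ff T d (c :: x) = 0) /\
    ff T d (c :: x) * d + (if d <= occ T (c :: x) then 2 * d else 0) <= 2 * occ T (c :: x).
  by apply: IH => /=; lia.
have R := ff_rec T d x.
have O := occ_children T x.
have Hle c : c \in undup T -> occ T (c :: x) <= occ T x.
  move=> Hc; apply: leq_trans O; rewrite (bigD1_seq c Hc (undup_uniq T)) /=; exact: leq_addr.
have F0 : (forall c, c \in undup T -> occ T (c :: x) < d) ->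
    hh T d x = 0 /\ \sum_(c <- undup T) ff T d (c :: x) = 0.
  move=> H; split.
    rewrite /hh big1_seq // => c /andP [_ Hc]; by rewrite leqNgt H.
  rewrite big1_seq // => c /andP [_ Hc]; exact: (proj1 (IHc c) (H c Hc)).
have Hsum : (\sum_(c <- undup T) ff T d (c :: x)) * d + 2 * (hh T d x * d) <= 2 * occ T x.
  rewrite big_distrl /hh big_distrl big_distrr -big_split /=.
  apply: (@leq_trans (\sum_(c <- undup T) 2 * occ T (c :: x))); last first.
    by rewrite -big_distrr /= leq_mul2l O orbT.
  apply: leq_sum => c _; have [_ B] := IHc c.
  case: (d <= occ T (c :: x)) B => /= B; rewrite ?mul1n ?mul0n ?muln0 ?addn0; lia.
set F := \sum_(c <- undup T) ff T d (c :: x) in R F0 Hsum.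
split.
  move=> Hx; have [H1 H2] := F0 (fun c Hc => leq_ltn_trans (Hle c Hc) Hx).
  by move: R; rewrite H1 H2 /=; case: (ff T d x).
have Hfd : ff T d x * d <= (if 1 < hh T d x then hh T d x else 0) * d + F * d.
  by rewrite -mulnDl leq_mul2r R orbT.
case Eh: (hh T d x) => [|h].
  have H0 : forall c, c \in undup T -> occ T (c :: x) < d.
    move=> c Hc; move/eqP: Eh; rewrite /hh sum_nat_seq_eq0 => /allP /(_ c Hc) /=.
    by rewrite eqb0 -ltnNge.
  have [_ H2] := F0 H0.
  move: R; rewrite H2 Eh /= => Hf; have -> : ff T d x = 0 by case: (ff T d x) Hf.
  by case: (leqP d (occ T x)) => H; lia.
rewrite Eh in Hfd Hsum.
case: h Eh Hfd Hsum => [|h] Eh Hfd Hsum /=.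
  rewrite mul1n in Hsum; rewrite /= mul0n add0n in Hfd.
  by case: (d <= occ T x); lia.
rewrite /= in Hfd.
have : 2 * d <= h.+2 * d by rewrite leq_mul2r; apply/orP; right; lia.
by case: (d <= occ T x); lia.
Qed.

Theorem proposition4 :
  exists C : nat, forall (A : eqType) (T : seq A),
    terminated T ->
    let n := size T in
    let d := up_log 2 n in
    heavy_links_from_wspecial T d * d <= C * n.
Proof.
exists 2 => A T _ /=.
set d := up_log 2 (size T).
have H1 : heavy_links_from_wspecial T d <= ff T d [::].
  rewrite /heavy_links_from_wspecial /ff big_mkcond /=.
  apply: leq_sum => p _; rewrite suffix0s /=.
  case: ifP => // /andP [_ Hw].
  have Hn : n_heavy T d p <= hh T d p.
    rewrite /n_heavy cnt_sum /hh; apply: leq_sum => c _.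
    by case H: (heavy_wlink T d p c) => //; rewrite (heavy_occ H).
  by rewrite (leq_trans Hw Hn).
have Ho : occ T [::] = size T.
  rewrite /occ -(cnt_sum (fun i => prefix [::] (drop i T))).
  by rewrite (@eq_count _ _ predT) ?count_predT ?size_iota // => i; exact: prefix0s.
have [_ B] := @main_ind A T d (size T).+1 [::] (ltnSn _).
rewrite Ho in B.
have H2 : heavy_links_from_wspecial T d * d <= ff T d [::] * d by rewrite leq_mul2r H1 orbT.
lia.
Qed.
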